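(* For any prime power $q$, there exist unit weighing matrices $W_1,\ldots,W_q$ of order $q^2$ and weight $q$ that are mutually quasi-unbiased for the parameters $(q^2,q,q^2,1)$ and such that, for any distinct $i,j\in\{1,\ldots,q\}$, $W_iW_j^*$ is a Bush-type $(q^2,q)$-Butson Hadamard matrix.
   Context: Let $\mathbb{T}=\{c\in\mathbb{C}:|c|=1\}$ and $W^*$ the conjugate transpose. A unit weighing matrix of order $n$ and weight $k$ is an $n\times n$ matrix $W$ with entries in $\{0\}\cup\mathbb{T}$ with $WW^*=kI_n$. Unit weighing matrices $W_1,W_2$ of order $n$ and weight $k$ are quasi-unbiased for parameters $(n,k,l,a)$ if $\frac1{\sqrt a}W_1W_2^*$ is a unit weighing matrix of order $n$ and weight $l$; mutually quasi-unbiased means pairwise. A complex Hadamard matrix of order $n$ is a unit weighing matrix of order $n$ and weight $n$; an $(n,m)$-Butson Hadamard matrix is a complex Hadamard matrix of order $n$ all of whose entries are $m$-th roots of unity. A complex Hadamard matrix $H$ of order $n^2$ is of Bush-type if, partitioned into $n\times n$ blocks $H=(H_{ij})_{i,j=1}^n$, it satisfies $H_{ii}=J_n$ for all $i$ and $H_{ij}J_n=J_nH_{ij}=O_n$ for all $i\neq j$, where $J_n$ is the all-ones matrix and $O_n$ the zero matrix. *)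

(* Defs.v *)
From HB Require Import structures.
From mathcomp Require Import all_boot all_order all_algebra complex.
From mathcomp Require Import Rstruct.
From Stdlib Require Import Reals.

Unset Implicit Arguments.
Unset Printing Implicit Defensive.

Import Order.TTheory GRing.Theory Num.Theory.
Local Open Scope ring_scope.

Definition CC : numClosedFieldType := Rdefinitions.R[i].

Definition ctrmx {C : numClosedFieldType} {m n : nat} (W : 'M[C]_(m, n))
  : 'M[C]_(n, m) := (map_mx Num.conj W)^T.

Definition unit_weighing {C : numClosedFieldType} (n k : nat) (W : 'M[C]_n)
  : Prop :=
  (forall i j, W i j = 0 \/ `|W i j| = 1) /\ W *m ctrmx W = k%:R%:M.

Definition quasi_unbiased {C : numClosedFieldType} (n k l a : nat)
    (W1 W2 : 'M[C]_n) : Prop :=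
  unit_weighing n k W1 /\ unit_weighing n k W2 /\
  unit_weighing n l ((sqrtC (a%:R : C))^-1 *: (W1 *m ctrmx W2)).

Definition mutually_quasi_unbiased {C : numClosedFieldType} (I : finType)
    (n k l a : nat) (W : I -> 'M[C]_n) : Prop :=
  forall i j, i != j -> quasi_unbiased n k l a (W i) (W j).

Definition complex_hadamard {C : numClosedFieldType} (n : nat) (H : 'M[C]_n)
  : Prop := unit_weighing n n H.

Definition butson_hadamard {C : numClosedFieldType} (n m : nat) (H : 'M[C]_n)
  : Prop := complex_hadamard n H /\ (forall i j, H i j ^+ m = 1).

(* the (i,j) block (of size n x n) of a matrix of order n*n, blocks being
   consecutive rows/columns: entry (a,b) of block (i,j) is H (i*n+a) (j*n+b) *)
Definition mxblk {C : numClosedFieldType} (n : nat) (H : 'M[C]_(n * n))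
    (i j : 'I_n) : 'M[C]_n :=
  \matrix_(a < n, b < n) H (mxvec_index i a) (mxvec_index j b).

Definition bush_type {C : numClosedFieldType} (n : nat) (H : 'M[C]_(n * n))
  : Prop :=
  complex_hadamard (n * n) H /\
  (forall i, mxblk n H i i = const_mx 1) /\
  (forall i j, i != j ->
     mxblk n H i j *m (const_mx 1 : 'M[C]_n) = 0 /\
     (const_mx 1 : 'M[C]_n) *m mxblk n H i j = 0).

Local Close Scope ring_scope.
Definition prime_power (q : nat) : Prop :=
  exists p k : nat, [/\ prime p, (0 < k)%N & q = (p ^ k)%N].

(* Main.v *)
Require Import Defs.
From HB Require Import structures.
From mathcomp Require Import all_boot all_order all_algebra complex.
From mathcomp Require Import Rstruct.
From mathcomp Require Import all_field cyclic cyclotomic ring.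
Import GRing.Theory Num.Theory.
Local Open Scope ring_scope.

Set Implicit Arguments.
Unset Strict Implicit.

Section Kernel.
Variables (C : numClosedFieldType) (q : nat).
Definition TT := ('I_q * 'I_q)%type.
Definition idx (s : TT) : 'I_(q * q) := mxvec_index s.1 s.2.
Definition unidx (r : 'I_(q * q)) : TT := enum_val (cast_ord (esym (mxvec_cast q q)) r).
Lemma idxK : cancel idx unidx.
Proof. by case=> i j; rewrite /idx /unidx /mxvec_index cast_ordK enum_rankK. Qed.
Lemma unidxK : cancel unidx idx.
Proof.
by move=> r; rewrite /idx /unidx /mxvec_index -surjective_pairing enum_valK cast_ordKV.
Qed.

Definition mxK (K : TT -> TT -> C) : 'M[C]_(q * q) := \matrix_(r, c) K (unidx r) (unidx c).

Lemma mxKE K s t : mxK K (idx s) (idx t) = K s t.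
Proof. by rewrite mxE !idxK. Qed.

Lemma sumTT (f : TT -> C) : \sum_(u : TT) f u = \sum_(y < q) \sum_(b < q) f (y, b).
Proof. by rewrite pair_big; apply: eq_bigr => [[]]. Qed.

Lemma mulK K1 K2 : mxK K1 *m mxK K2 = mxK (fun s t => \sum_u K1 s u * K2 u t).
Proof.
apply/matrixP=> r c; rewrite !mxE (reindex idx); last first.
  by apply: onW_bij; exists unidx; [exact: idxK | exact: unidxK].
by apply: eq_bigr => u _; rewrite !mxE idxK.
Qed.

Lemma ctrK K : ctrmx (mxK K) = mxK (fun s t => (K t s)^*).
Proof. by apply/matrixP=> r c; rewrite !mxE. Qed.

Lemma scalarK K (k : C) : (forall s t, K s t = (s == t)%:R * k) -> mxK K = k%:M.
Proof.
move=> HK; apply/matrixP=> r c; rewrite -(unidxK r) -(unidxK c) mxKE HK !mxE.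
by rewrite (can_eq unidxK) mulr_natl !unidxK.
Qed.
End Kernel.

Lemma ctrM (C : numClosedFieldType) n (A B : 'M[C]_n) :
  ctrmx (A *m B) = ctrmx B *m ctrmx A.
Proof.
apply/matrixP=> r c; rewrite !mxE rmorph_sum; apply: eq_bigr => k _.
by rewrite !mxE rmorphM mulrC.
Qed.

Lemma ctrK2 (C : numClosedFieldType) n (A : 'M[C]_n) : ctrmx (ctrmx A) = A.
Proof. by apply/matrixP=> r c; rewrite !mxE conjCK. Qed.

Lemma ctr_mul_swap (C : numClosedFieldType) n (W : 'M[C]_n) (k : nat) :
  (0 < k)%N -> W *m ctrmx W = k%:R%:M -> ctrmx W *m W = k%:R%:M.
Proof.
move=> k0 WW.
have knz : (k%:R : C) != 0 by rewrite pnatr_eq0 -lt0n.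
have : ((k%:R)^-1 *: W) *m ctrmx W = 1%:M.
  by rewrite -scalemxAl WW scale_scalar_mx mulVf.
move/mulmx1C; rewrite -scalemxAr => H.
have := congr1 (fun M => k%:R *: M) H; rewrite /= scalerA mulfV // scale1r => ->.
by rewrite scale_scalar_mx mulr1.
Qed.

Lemma unidx_mx q (x a : 'I_q) : unidx (mxvec_index x a) = (x, a).
Proof. exact: (idxK (x, a)). Qed.

Section Constr.
Variables (C : numClosedFieldType) (q : nat) (F : finFieldType).
Variables (e : 'I_q -> F) (einv : F -> 'I_q).
Hypotheses (eK : cancel e einv) (einvK : cancel einv e).
Variable (w : C).
Hypothesis prim : q.-primitive_root w.

Let q_gt0 : (0 < q)%N. Proof. exact: prim_order_gt0 prim. Qed.

Lemma normw : `|w| = 1 :> C.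
Proof.
apply/eqP; rewrite -(pexpr_eq1 q_gt0) ?normr_ge0 // -normrX prim_expr_order // normr1.
exact: eqxx.
Qed.

Lemma normwX x : `|w ^+ x| = 1.
Proof. by rewrite normrX normw expr1n. Qed.

Definition zz (x x' : 'I_q) : C := w ^+ x * (w ^+ x')^*.

Lemma zz_norm x x' : `|zz x x'| = 1.
Proof. by rewrite normrM norm_conjC !normwX mulr1. Qed.

Lemma zz_norm_pow x x' n : `|zz x x' ^+ n| = 1.
Proof. by rewrite normrX zz_norm expr1n. Qed.

Lemma conjw_mul x : (w ^+ x)^* * w ^+ x = 1.
Proof. by rewrite mulrC -normCK normwX expr1n. Qed.

Lemma zz_diag x : zz x x = 1.
Proof. by rewrite /zz mulrC conjw_mul. Qed.

Lemma zz_q x x' : zz x x' ^+ q = 1.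
Proof.
by rewrite /zz exprMn -rmorphXn (exprAC w x q) (exprAC w x' q) !(prim_expr_order prim) !expr1n rmorph1 mulr1.
Qed.

Lemma zz_neq1 x x' : x != x' -> zz x x' != 1.
Proof.
move=> nx; apply: contra nx => /eqP z1.
have : w ^+ x = w ^+ x'.
  by rewrite -[w ^+ x]mulr1 -(conjw_mul x') mulrA -/(zz x x') z1 mul1r.
move/eqP; rewrite (eq_prim_root_expr prim) !modn_small //.
Qed.

Lemma geom0 (z : C) : z ^+ q = 1 -> z != 1 -> \sum_(y < q) z ^+ y = 0.
Proof.
move=> zq z1; have := subrX1 z q; rewrite zq subrr => /esym/eqP.
by rewrite mulf_eq0 subr_eq0 (negbTE z1) => /eqP.
Qed.

Lemma geomq (x x' : 'I_q) : \sum_(y < q) zz x x' ^+ y = (x == x')%:R * q%:R.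
Proof.
have [<-|nx] := eqVneq x x'.
  by rewrite zz_diag mul1r (eq_bigr (fun _ => 1)) ?sumr_const ?card_ord // => y _; rewrite expr1n.
by rewrite mul0r geom0 ?zz_q ?zz_neq1.
Qed.

Definition Wk (i : 'I_q) (s t : TT q) : C :=
  if e t.2 == e s.2 + e i * e t.1 then (w ^+ s.1) ^+ t.1 else 0.

Definition W i := mxK (Wk i).

Lemma e_inj : injective e. Proof. exact: can_inj eK. Qed.
Lemma einv_inj : injective einv. Proof. exact: can_inj einvK. Qed.

Lemma prodW i j s t : \sum_u Wk i s u * (Wk j t u)^* =
  \sum_(y < q) (e s.2 + e i * e y == e t.2 + e j * e y)%:R * zz s.1 t.1 ^+ y.
Proof.
rewrite sumTT; apply: eq_bigr => y _.
rewrite (eq_bigr (fun b => if b == einv (e s.2 + e i * e y) then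
   ((e s.2 + e i * e y) == (e t.2 + e j * e y))%:R * zz s.1 t.1 ^+ y else 0)).
  by rewrite -big_mkcond big_pred1_eq.
move=> b _; rewrite /Wk /=.
have -> : (e b == e s.2 + e i * e y) = (b == einv (e s.2 + e i * e y)).
  by rewrite -(can_eq eK) einvK.
case: eqP => [->|_]; last by rewrite mul0r.
rewrite einvK; case: eqP => _; rewrite ?mulr1n ?mulr0n; last by rewrite rmorph0 !mulr0 mul0r.
by rewrite mul1r /zz exprMn rmorphXn.
Qed.

Lemma eq_add2r (V : zmodType) (a b c : V) : (a + c == b + c) = (a == b).
Proof. by apply/eqP/eqP => [/addIr|->]. Qed.

Lemma WW i : W i *m ctrmx (W i) = q%:R%:M.
Proof.
rewrite /W ctrK mulK; apply: scalarK => [[x a] [x' a']].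
rewrite prodW /=.
rewrite (eq_bigr (fun y : 'I_q => (a == a')%:R * zz x x' ^+ y)); last first.
  by move=> y _; rewrite eq_add2r (inj_eq e_inj).
by rewrite -mulr_sumr geomq mulrA -natrM mulnb xpair_eqE andbC.
Qed.

Definition y0 (i j a a' : 'I_q) : 'I_q := einv ((e a' - e a) / (e i - e j)).
Definition Hk i j (s t : TT q) : C := zz s.1 t.1 ^+ y0 i j s.2 t.2.

Lemma dnz i j : i != j -> e i - e j != 0.
Proof. by rewrite subr_eq0 (inj_eq e_inj). Qed.

Lemma cond_y0 i j a a' y : i != j ->
  (e a + e i * e y == e a' + e j * e y) = (y == y0 i j a a').
Proof.
move=> /dnz d; rewrite /y0 -(can_eq eK) einvK; apply/eqP/eqP => H.
  have -> : e a' = e a + e i * e y - e j * e y by rewrite H addrK.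
  by field.
by rewrite H; field.
Qed.

Lemma prodWij i j s t : i != j -> \sum_u Wk i s u * (Wk j t u)^* = Hk i j s t.
Proof.
move=> ij; rewrite prodW.
rewrite (eq_bigr (fun y : 'I_q => (y == y0 i j s.2 t.2)%:R * zz s.1 t.1 ^+ y)); last first.
  by move=> y _; rewrite cond_y0.
rewrite (bigD1 (y0 i j s.2 t.2)) //= eqxx mul1r big1 ?addr0 // => y /negbTE ->.
by rewrite mul0r.
Qed.

Lemma WWij i j : i != j -> W i *m ctrmx (W j) = mxK (Hk i j).
Proof.
move=> ij; rewrite /W ctrK mulK; apply/matrixP => r c; by rewrite !mxE prodWij.
Qed.

Lemma Hk_norm i j s t : `|Hk i j s t| = 1.
Proof. exact: zz_norm_pow. Qed.

Lemma Hk_q i j s t : Hk i j s t ^+ q = 1.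
Proof. by rewrite /Hk exprAC zz_q expr1n. Qed.

Lemma Hk_diag i j x a b : Hk i j (x, a) (x, b) = 1.
Proof. by rewrite /Hk /= zz_diag expr1n. Qed.

Lemma y0_inj_r i j a : i != j -> injective (y0 i j a).
Proof.
move=> /dnz d b1 b2 /einv_inj H; apply: e_inj.
have := congr1 (fun z => z * (e i - e j) + e a) H.
by rewrite /= !divfK // !subrK.
Qed.

Lemma y0_inj_l i j b : i != j -> injective (y0 i j ^~ b).
Proof.
move=> /dnz d a1 a2 /einv_inj H; apply: e_inj.
have := congr1 (fun z => e b - z * (e i - e j)) H.
by rewrite /= !divfK // !subKr.
Qed.

Lemma Hk_rowsum i j x x' a : i != j -> x != x' ->
  \sum_(b < q) Hk i j (x, a) (x', b) = 0.
Proof.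
move=> ij nx; rewrite /Hk /=.
transitivity (\sum_(y < q) zz x x' ^+ y).
  by symmetry; apply: (reindex_inj (y0_inj_r (a:=a) ij)).
by rewrite geomq (negbTE nx) mul0r.
Qed.

Lemma Hk_colsum i j x x' b : i != j -> x != x' ->
  \sum_(a < q) Hk i j (x, a) (x', b) = 0.
Proof.
move=> ij nx; rewrite /Hk /=.
transitivity (\sum_(y < q) zz x x' ^+ y).
  by symmetry; apply: (reindex_inj (y0_inj_l (b:=b) ij)).
by rewrite geomq (negbTE nx) mul0r.
Qed.

Lemma uwW i : unit_weighing (q * q) q (W i).
Proof.
split; last exact: WW.
move=> r c; rewrite mxE /Wk; case: ifP => _; last by left.
by right; rewrite normrX normwX expr1n.
Qed.

Lemma HHij i j : (W i *m ctrmx (W j)) *m ctrmx (W i *m ctrmx (W j)) = (q * q)%:R%:M.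
Proof.
rewrite ctrM ctrK2 mulmxA -(mulmxA (W i)) (ctr_mul_swap q_gt0 (WW j)).
by rewrite mul_mx_scalar -scalemxAl WW scale_scalar_mx -natrM.
Qed.

Lemma uwH i j : i != j -> unit_weighing (q * q) (q * q) (W i *m ctrmx (W j)).
Proof.
move=> ij; split; last exact: HHij.
by move=> r c; right; rewrite WWij // mxE Hk_norm.
Qed.

Lemma main_props :
 (forall i, unit_weighing (q * q) q (W i)) /\
 mutually_quasi_unbiased 'I_q (q * q) q (q * q) 1 W /\
 (forall i j, i != j -> butson_hadamard (q * q) q (W i *m ctrmx (W j)) /\
                        bush_type q (W i *m ctrmx (W j))).
Proof.
split; first exact: uwW.
split.
  move=> i j ij; split; first exact: uwW.
  split; first exact: uwW.
  by rewrite mulr1n sqrtC1 invr1 scale1r; apply: uwH.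
move=> i j ij; split.
  split; first exact: uwH.
  by move=> r c; rewrite WWij // mxE Hk_q.
split; first exact: uwH.
rewrite WWij //; split.
  move=> x; apply/matrixP=> a b.
  by rewrite !mxE !unidx_mx Hk_diag.
move=> x x' nx; split; apply/matrixP=> a c; rewrite !mxE.
  rewrite (eq_bigr (fun b => Hk i j (x,a) (x',b))) ?Hk_rowsum // => b _.
  by rewrite !mxE mulr1 !unidx_mx.
rewrite (eq_bigr (fun b => Hk i j (x,b) (x',c))) ?Hk_colsum // => b _.
by rewrite !mxE mul1r !unidx_mx.
Qed.
End Constr.

Lemma prim_exists (C : numClosedFieldType) n : (n > 0)%N -> {z : C | n.-primitive_root z}.
Proof.
pose p : {poly C} := 'X^n - 1; have [r Dp] := closed_field_poly_normal p.
move=> n_gt0; apply/sigW; rewrite (monicP _) ?monicXnsubC // scale1r in Dp.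
have rn1: all n.-unity_root r by apply/allP=> z; rewrite -root_prod_XsubC -Dp.
have sz_r: (n < (size r).+1)%N.
  by rewrite -(size_prod_XsubC r id) -Dp size_XnsubC.
have [|z] := hasP (has_prim_root n_gt0 rn1 _ sz_r); last by exists z.
by rewrite -separable_prod_XsubC -Dp separable_Xn_sub_1 // pnatr_eq0 -lt0n.
Qed.

Unset Implicit Arguments.
Set Strict Implicit.

Theorem theorem6p3 (q : nat) : prime_power q ->
  exists W : 'I_q -> 'M[CC]_(q * q),
    (forall i, unit_weighing (q * q) q (W i)) /\
    mutually_quasi_unbiased 'I_q (q * q) q (q * q) 1 W /\
    (forall i j, i != j ->
       butson_hadamard (q * q) q (W i *m ctrmx (W j)) /\
       bush_type q (W i *m ctrmx (W j))).
Proof.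
case=> p [k [pr_p k0 hq]].
have qpk : q = (p ^ k)%N.
  rewrite hq; clear; elim: k => //= k IH; by rewrite expnS IH.
have [F _ cardF0] := pPrimePowerField pr_p k0.
have cardF : #|F| = q by rewrite cardF0 qpk.
have q0 : (0 < q)%N by rewrite qpk expn_gt0 prime_gt0.
have [w prim] := @prim_exists CC _ q0.
pose e := fun i : 'I_q => enum_val (cast_ord (esym cardF) i).
pose einv := fun f : F => cast_ord cardF (enum_rank f).
have eK : cancel e einv by move=> i; rewrite /e /einv enum_valK cast_ordKV.
have einvK : cancel einv e by move=> f; rewrite /e /einv cast_ordK enum_rankK.
exists (W e w); exact: (main_props eK einvK prim).
Qed.
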